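(* Let $\phi(\mu)=\sum_{i=1}^n\operatorname{arccot}\mu_i$ for $\mu\in\mathbb{R}^n$, let $\Gamma=\{\mu\in\mathbb{R}^n:0<\phi(\mu)<\pi\}$ and $f(\mu)=\cot\phi(\mu)$ on $\Gamma$. For $\sigma\in\mathbb{R}$ let $\Gamma^\sigma=\{\mu\in\mathbb{R}^n:0<\phi(\mu)<\operatorname{arccot}\sigma\}$. Then for any $\sigma,\sigma'\in\mathbb{R}$ with $\sigma<\sigma'$ there exists a constant $N>0$, depending only on $\sigma$ and $\sigma'$, such that $$\Gamma^\sigma+N\mathbf 1\subset\Gamma^{\sigma'},$$ where $\mathbf 1=(1,\dots,1)$.
   Context: $\operatorname{arccot}:\mathbb{R}\to(0,\pi)$ denotes the inverse of $\cot$ on $(0,\pi)$. *)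

(* Defs.v *)
From HB Require Import structures.
From mathcomp Require Import all_boot all_order all_algebra.
From mathcomp Require Import all_classical all_reals all_analysis.
Set Implicit Arguments. Unset Strict Implicit. Unset Printing Implicit Defensive.
Import Order.TTheory GRing.Theory Num.Theory.
Local Open Scope ring_scope.

(* arccot : R -> (0, pi), the inverse of cot on (0, pi). *)
Definition arccot {R : realType} (x : R) : R := pi / 2 - atan x.

Definition phi {R : realType} {n : nat} (mu : 'rV[R]_n) : R :=
  \sum_(i < n) arccot (mu ord0 i).

Definition Gamma {R : realType} (n : nat) : set 'rV[R]_n :=
  [set mu | 0 < phi mu < pi].

Definition f {R : realType} {n : nat} (mu : 'rV[R]_n) : R :=
  cos (phi mu) / sin (phi mu).

Definition Gamma_sigma {R : realType} (n : nat) (sigma : R) : set 'rV[R]_n :=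
  [set mu | 0 < phi mu < arccot sigma].

Definition ones {R : realType} (n : nat) : 'rV[R]_n := const_mx 1.

(* Main.v *)
Require Import Defs.
From HB Require Import structures.
From mathcomp Require Import all_boot all_order all_algebra.
From mathcomp Require Import all_classical all_reals all_analysis.
From mathcomp Require Import lra.
Import Order.TTheory GRing.Theory Num.Theory.
Local Open Scope ring_scope.

Lemma arccot_gt0 (R : realType) (x : R) : 0 < arccot x.
Proof. by rewrite /arccot subr_gt0 atan_ltpi2. Qed.

Lemma arccot_ltpi (R : realType) (x : R) : arccot x < pi.
Proof.
rewrite /arccot ltrBlDr; have := atan_gtNpi2 x.
have := @pi_gt0 R; lra.
Qed.

Lemma arccot_lt (R : realType) (x y : R) : arccot x < arccot y -> y < x.
Proof.
rewrite /arccot ltrD2l ltrN2 => h; rewrite ltNge; apply/negP => /le_atan.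
by rewrite leNgt h.
Qed.

Theorem proposition2p6 (R : realType) (n : nat) (sigma sigma' : R) :
  sigma < sigma' ->
  exists N : R, 0 < N /\
    forall mu : 'rV[R]_n, @Gamma_sigma R n sigma mu ->
      @Gamma_sigma R n sigma' (mu + N *: @ones R n).
Proof.
move=> hs.
case: n => [|k].
  exists 1; split => // mu; rewrite /Gamma_sigma /phi /= big_ord0 ltxx //.
set b := arccot sigma'.
have b0 : 0 < b := arccot_gt0 _ _.
have bpi : b < pi := arccot_ltpi _ _.
have kpos : (0 : R) < k.+1%:R by rewrite ltr0n.
set c := b / k.+1%:R.
have c0 : 0 < c by rewrite divr_gt0.
have cb : c <= b.
  rewrite /c ler_pdivrMr // -{1}(mulr1 b) ler_pM2l // ler1n //.
set t := pi / 2 - c.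
have tin : t \in `](- (pi / 2)), (pi / 2)[.
  rewrite in_itv /= /t; apply/andP; split; lra.
set Y := tan t.
have hY : atan Y = t by rewrite /Y tanK.
exists (Num.max (Y - sigma) 1); split; first by rewrite lt_max ltr01 orbT.
move=> mu /andP [h0 h1].
have mugt : forall i, sigma < mu ord0 i.
  move=> i; apply: arccot_lt; apply: le_lt_trans h1.
  rewrite /phi (bigD1 i) //= lerDl sumr_ge0 // => j _.
  exact/ltW/arccot_gt0.
have key : forall i, arccot ((mu + Num.max (Y - sigma) 1 *: ones k.+1) ord0 i) < c.
  move=> i; rewrite !mxE mulr1 /arccot.
  have : Y < mu ord0 i + Num.max (Y - sigma) 1.
    have := mugt i; have : Y - sigma <= Num.max (Y - sigma) 1 by rewrite le_max lexx. lra.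
  move/lt_atan; rewrite hY /t; lra.
apply/andP; split.
  rewrite /phi; apply: (@le_lt_trans _ _ (\sum_(i < k.+1) (0:R))); first by rewrite big1.
  apply: ltr_sum; first by apply/hasP; exists ord0; rewrite ?mem_index_enum.
  by move=> i _; apply: arccot_gt0.
apply: (@lt_le_trans _ _ (\sum_(i < k.+1) c)).
  apply: ltr_sum; first by apply/hasP; exists ord0; rewrite ?mem_index_enum.
  by move=> i _; apply: key.
rewrite sumr_const card_ord /c.
rewrite -[X in X <= _]mulr_natr.
by rewrite divfK ?pnatr_eq0.
Qed.
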